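(* Let $\mu$ be a continuous capacity on $(\Omega,\mathcal{F})$ and $\mathbf{Y}=\{Y_n\}_{n\in\mathbb{N}}$ a real-valued stochastic process on $(\Omega,\mathcal{F})$. Then $\mathbf{Y}$ is stationary on $(\Omega,\mathcal{F},\mu)$ if and only if $\mu_{\mathbf{Y}}$ is $\tau$-invariant, where $\tau$ is the shift on $\mathbb{R}^{\mathbb{N}}$.
   Context: A capacity is $\mu:\mathcal{F}\to[0,1]$ with $\mu(\emptyset)=0$, $\mu(\Omega)=1$, monotone; continuous if $\mu(A_n)\to\mu(A)$ whenever $A_n\uparrow A$ or $A_n\downarrow A$. $\mathbf{Y}$ is stationary if for all $n\in\mathbb{N}$, $k\in\mathbb{N}_0$ and Borel $A\subseteq\mathbb{R}^{k+1}$, $\mu(\{(Y_n,\dots,Y_{n+k})\in A\})=\mu(\{(Y_{n+1},\dots,Y_{n+1+k})\in A\})$. $\mathbb{R}^{\mathbb{N}}$ carries the $\sigma$-algebra $\sigma(\mathcal{C})$ generated by cylinders $\{\mathbf{x}:(x_1,\dots,x_n)\in H\}$, $n\in\mathbb{N}$, $H\in\mathcal{B}(\mathbb{R}^n)$; $\tau(x_1,x_2,x_3,\dots)=(x_2,x_3,\dots)$; $\mu_{\mathbf{Y}}(C)=\mu(\{\omega:(Y_1(\omega),Y_2(\omega),\dots)\in C\})$ for $C\in\sigma(\mathcal{C})$; $\tau$-invariance means $\mu_{\mathbf{Y}}(\tau^{-1}C)=\mu_{\mathbf{Y}}(C)$ for all $C\in\sigma(\mathcal{C})$. *)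

(* Defs.v *)
From HB Require Import structures.
From mathcomp Require Import all_boot all_order all_algebra.
From mathcomp Require Import all_classical all_reals all_analysis.
Set Implicit Arguments. Unset Strict Implicit. Unset Printing Implicit Defensive.
Import Order.TTheory GRing.Theory Num.Theory.
Import numFieldNormedType.Exports.
Local Open Scope classical_set_scope.
Local Open Scope ring_scope.

Section Defs.
Context {R : realType}.

Definition borel_rV (n : nat) : set (set 'rV[R]_n) :=
  <<s [set A : set 'rV[R]_n | open A] >>.

Definition capacity {d} {Omega : measurableType d} (mu : set Omega -> R) : Prop :=
  [/\ mu set0 = 0, mu setT = 1,
      (forall A, measurable A -> 0 <= mu A <= 1) &
      (forall A B, measurable A -> measurable B -> A `<=` B -> mu A <= mu B)].

Definition continuous_capacity {d} {Omega : measurableType d}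
    (mu : set Omega -> R) : Prop :=
  capacity mu /\
  (forall (A : nat -> set Omega) (B : set Omega),
      (forall n, measurable (A n)) -> measurable B ->
      (forall n, A n `<=` A n.+1) -> \bigcup_n A n = B ->
      (mu \o A) @ \oo --> mu B) /\
  (forall (A : nat -> set Omega) (B : set Omega),
      (forall n, measurable (A n)) -> measurable B ->
      (forall n, A n.+1 `<=` A n) -> \bigcap_n A n = B ->
      (mu \o A) @ \oo --> mu B).

(* A real-valued process Y = (Y_1, Y_2, ...); index 1 is encoded as 0. *)
Definition stochastic_process {d} {Omega : measurableType d}
    (Y : nat -> Omega -> R) : Prop :=
  forall n, measurable_fun setT (Y n).

Definition stationary {d} {Omega : measurableType d}
    (mu : set Omega -> R) (Y : nat -> Omega -> R) : Prop :=
  forall (n k : nat) (A : set 'rV[R]_k.+1), borel_rV A ->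
    mu [set w | A (\row_(i < k.+1) Y (n + i)%N w)] =
    mu [set w | A (\row_(i < k.+1) Y (n.+1 + i)%N w)].

Definition cylinders : set (set (nat -> R)) :=
  [set C | exists (n : nat) (H : set 'rV[R]_n.+1), borel_rV H /\
           C = [set x : nat -> R | H (\row_(i < n.+1) x i)]].

Definition sigma_cyl : set (set (nat -> R)) := <<s cylinders >>.

Definition shift (x : nat -> R) : nat -> R := fun n => x n.+1.

Definition law {d} {Omega : measurableType d}
    (mu : set Omega -> R) (Y : nat -> Omega -> R) (C : set (nat -> R)) : R :=
  mu [set w | C (fun n => Y n w)].

Definition shift_invariant (nu : set (nat -> R) -> R) : Prop :=
  forall C, sigma_cyl C -> nu (shift @^-1` C) = nu C.

End Defs.

(* Main.v *)
Require Import Defs.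
From mathcomp Require Import all_boot all_order all_algebra.
From mathcomp Require Import all_classical all_reals all_analysis.
From mathcomp Require Import lra.

Module Helpers.
Set Implicit Arguments. Unset Strict Implicit. Unset Printing Implicit Defensive.
Import Order.TTheory GRing.Theory Num.Theory.
Import numFieldNormedType.Exports.
Local Open Scope classical_set_scope.
Local Open Scope ring_scope.

Lemma g_sigma_ind (T : Type) (G P : set (set T)) :
  P set0 -> (forall A, P A -> P (~` A)) ->
  (forall F : nat -> set T, (forall n, P (F n)) -> P (\bigcup_n F n)) ->
  G `<=` P -> <<s G >> `<=` P.
Proof.
move=> P0 PC PU GP; apply: smallest_sub => //; split => //.
by move=> A PA; rewrite setTD; exact: PC.
Qed.

Section helpers.
Context {R : realType}.

Lemma borelC n (A : set 'rV[R]_n) : borel_rV A -> borel_rV (~` A).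
Proof. by move=> h; rewrite -setTD; apply: sigma_algebraCD. Qed.

Lemma borelU n (A B : set 'rV[R]_n) : borel_rV A -> borel_rV B -> borel_rV (A `|` B).
Proof.
move=> hA hB.
have -> : A `|` B = \bigcup_i (fun i => if i is 0%N then A else B) i.
  apply/seteqP; split => [x [Ax|Bx]|x [[|i] _ h]]; [by exists 0%N|by exists 1%N| by left | by right].
by apply: sigma_algebra_bigcup => -[|i].
Qed.

Lemma borelD n (A B : set 'rV[R]_n) : borel_rV A -> borel_rV B -> borel_rV (A `\` B).
Proof.
move=> hA hB; rewrite setDE -[A]setCK -setCU; apply: borelC; apply: borelU => //; exact: borelC.
Qed.

Lemma borel_preimage m n (f : 'rV[R]_m -> 'rV[R]_n) : continuous f ->
  forall B, borel_rV B -> borel_rV (f @^-1` B).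
Proof.
move=> cf; apply: (@g_sigma_ind _ _ (fun B => borel_rV (f @^-1` B))).
- by rewrite preimage_set0; exact: sigma_algebra0.
- by move=> A hA; rewrite -preimage_setC; exact: borelC.
- by move=> F hF; rewrite preimage_bigcup; exact: sigma_algebra_bigcup.
- move=> U oU; apply: sub_sigma_algebra; apply: open_comp => //.
Qed.

Definition sel m n (g : 'I_n -> 'I_m) (y : 'rV[R]_m) : 'rV[R]_n :=
  \row_i y 0 (g i).

Lemma sel_cont m n (g : 'I_n -> 'I_m) : continuous (sel g).
Proof.
move=> x A /nbhs_ballP [e e0 sA]; apply/nbhs_ballP; exists e => // y [_ Hy].
by apply: sA; split => // i j; rewrite !mxE; exact: Hy.
Qed.

End helpers.

Section opens.
Context {R : realType}.

Definition Sb k (U : set 'rV[R]_k) (j : nat) : set 'rV[R]_k :=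
  match @unpickle ('rV[rat]_k * rat)%type j with
  | Some qr => if pselect (ball (map_mx (ratr : rat -> R) qr.1 : 'rV[R]_k) (ratr qr.2 : R) `<=` U)
               then ball (map_mx (ratr : rat -> R) qr.1 : 'rV[R]_k) (ratr qr.2 : R) else set0
  | None => set0 end.

Lemma Sb_sub k (U : set 'rV[R]_k) j : Sb U j `<=` U.
Proof.
rewrite /Sb; case: unpickle => [[q r]|] //=; case: pselect => //= sU.
exact: sub0set.
Qed.

Lemma Sb_cover k (U : set 'rV[R]_k) x : open U -> U x -> exists j, Sb U j x.
Proof.
move=> oU Ux.
have : nbhs x U by move: oU; rewrite openE => /(_ _ Ux).
move=> /nbhs_ballP [e e0 sU].
have e20 : 0 < e / 2 by rewrite divr_gt0.
have [r] := rat_in_itvoo e20; rewrite in_itv /= => /andP[r0 re].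
have : forall j : 'I_k, exists q : rat, ratr q \in `](x 0 j - ratr r), (x 0 j + ratr r)[.
  move=> j; apply: rat_in_itvoo; lra.
move=> /choice [f hf].
pose c : 'rV[R]_k := map_mx ratr (\row_j f j).
have hin : ball c (ratr r) x.
  split => // i j; rewrite (ord1 i) !mxE.
  have := hf j; rewrite in_itv /= => /andP[h1 h2].
  rewrite -ball_normE /ball_ /= ltr_distlC; apply/andP; split; lra.
have hsub : ball c (ratr r) `<=` U.
  move=> y hy; apply: sU; apply: (@le_ball _ _ _ (ratr r + ratr r)); first lra.
  exact: ball_triangle (ball_sym hin) hy.
exists (pickle (\row_j f j, r)); rewrite /Sb pickleK /=.
by case: pselect.
Qed.

End opens.

Section measrow.
Context {R : realType} {d : measure_display} {Omega : measurableType d}.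
Variables (k : nat) (Z : 'I_k -> Omega -> R).
Hypothesis hZ : forall i, measurable_fun setT (Z i).

Lemma meas_ball (c : 'rV[R]_k) (r : R) : measurable [set w | ball c r (\row_i Z i w)].
Proof.
case: (ltP 0 r) => r0; last first.
  rewrite (_ : [set w | _] = set0); first exact: measurable0.
  by apply/seteqP; split => // w [/= h _]; move: r0; rewrite leNgt h.
rewrite (_ : [set w | _] = \bigcap_(j in [set: 'I_k]) (Z j @^-1` ball (c 0 j) r)).
  apply: fin_bigcap_measurable; first exact: finite_finset.
  move=> j _; rewrite -[X in measurable X]setTI; apply: (hZ j measurableT).
  exact: measurable_realfun.measurable_ball.
apply/seteqP; split => w /=.
  by move=> [_ h] j _; have := h 0 j; rewrite mxE.
by move=> h; split => // i j; rewrite (ord1 i) mxE; exact: h.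
Qed.

Lemma meas_open (U : set 'rV[R]_k) : open U -> measurable [set w | U (\row_i Z i w)].
Proof.
move=> oU.
have E : [set w | U (\row_i Z i w)] = \bigcup_j [set w | Sb U j (\row_i Z i w)].
  apply/seteqP; split; last by move=> w [j _ h]; exact: Sb_sub h.
  by move=> w /= Uw; have [j hj] := Sb_cover oU Uw; exists j.
rewrite E.
apply: bigcupT_measurable => j; rewrite /Sb; case: unpickle => [[q r]|] /=; last exact: measurable0.
destruct (pselect _); [exact: meas_ball | exact: measurable0].
Qed.

Lemma meas_row B : borel_rV B -> measurable [set w | B (\row_i Z i w)].
Proof.
apply: (@g_sigma_ind _ _ (fun B => measurable [set w | B (\row_i Z i w)])).
- exact: measurable0.
- by move=> A hA; apply: measurableC.
- by move=> F hF; rewrite (_ : [set w | _] = \bigcup_n [set w | F n (\row_i Z i w)]);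
    [exact: bigcupT_measurable | apply/seteqP; split => w].
- by move=> U oU; exact: meas_open.
Qed.

End measrow.

Section cyl.
Context {R : realType}.

Lemma borel0 n : @borel_rV R n set0.
Proof. exact: sigma_algebra0. Qed.

Lemma borelT n : @borel_rV R n setT.
Proof. by rewrite -setC0; apply: borelC; exact: borel0. Qed.

Lemma cyl_lift n m (H : set 'rV[R]_n.+1) : (n <= m)%N -> borel_rV H ->
  exists H' : set 'rV[R]_m.+1, borel_rV H' /\
    [set x : nat -> R | H (\row_(i < n.+1) x i)] = [set x | H' (\row_(i < m.+1) x i)].
Proof.
move=> nm hH.
pose g := fun i : 'I_n.+1 => widen_ord (nm : (n.+1 <= m.+1)%N) i.
exists (sel g @^-1` H); split; first exact: borel_preimage (@sel_cont _ _ _ g) _ hH.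
apply/seteqP; split => x /=; rewrite /sel (_ : \row_i _ = \row_(i < n.+1) x i) //;
  by apply/rowP => i; rewrite !mxE.
Qed.

Lemma cyl_setring : setring (@cylinders R).
Proof.
split.
- exists 0%N, set0; split; first exact: borel0.
  by apply/seteqP; split => x.
- move=> _ _ [n1 [H1 [h1 ->]]] [n2 [H2 [h2 ->]]].
  have [H1' [h1' ->]] := cyl_lift (leq_maxl n1 n2) h1.
  have [H2' [h2' ->]] := cyl_lift (leq_maxr n1 n2) h2.
  exists (maxn n1 n2), (H1' `|` H2'); split; first exact: borelU.
  by apply/seteqP; split => x.
- move=> _ _ [n1 [H1 [h1 ->]]] [n2 [H2 [h2 ->]]].
  have [H1' [h1' ->]] := cyl_lift (leq_maxl n1 n2) h1.
  have [H2' [h2' ->]] := cyl_lift (leq_maxr n1 n2) h2.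
  exists (maxn n1 n2), (H1' `\` H2'); split; first exact: borelD.
  by apply/seteqP; split => x.
Qed.

Lemma cylT : @cylinders R setT.
Proof.
exists 0%N, setT; split; first exact: borelT.
by apply/seteqP; split => x.
Qed.

Lemma sigma_cyl_sr : @sigma_cyl R `<=` <<sr @cylinders R >>.
Proof.
apply: smallest_sub; last exact: sub_g_sigma_ring.
case: (smallest_sigma_ring (@cylinders R)) => h0 hD hU.
split => //; move=> A hA; apply: hD => //; apply: sub_g_sigma_ring; exact: cylT.
Qed.

Lemma sigma_cylC A : @sigma_cyl R A -> sigma_cyl (~` A).
Proof. by move=> h; rewrite -setTD; apply: sigma_algebraCD. Qed.

Lemma sigma_cylU (F : nat -> set (nat -> R)) : (forall n, sigma_cyl (F n)) ->
  sigma_cyl (\bigcup_n F n).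
Proof. by move=> h; apply: sigma_algebra_bigcup. Qed.

Lemma sigma_cylI (F : nat -> set (nat -> R)) : (forall n, sigma_cyl (F n)) ->
  sigma_cyl (\bigcap_n F n).
Proof.
move=> h; rewrite -[X in sigma_cyl X]setCK setC_bigcap; apply: sigma_cylC.
by apply: sigma_cylU => n; apply: sigma_cylC.
Qed.

Lemma meas_cyl d (Omega : measurableType d) (Z : nat -> Omega -> R) :
  (forall n, measurable_fun setT (Z n)) ->
  forall C, sigma_cyl C -> measurable [set w | C (fun n => Z n w)].
Proof.
move=> hZ.
apply: (@g_sigma_ind _ _ (fun C => measurable [set w | C (fun n => Z n w)])).
- exact: measurable0.
- by move=> A hA; apply: measurableC.
- by move=> F hF; rewrite (_ : [set w | _] = \bigcup_n [set w | F n (fun m => Z m w)]);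
    [exact: bigcupT_measurable | apply/seteqP; split => w].
- move=> _ [n [H [hH ->]]].
  exact: (meas_row (Z := fun i : 'I_n.+1 => Z i)).
Qed.

End cyl.

Lemma ltn_shift n k (i : 'I_k.+1) : (n + i < (n + k).+1)%N.
Proof. by rewrite ltnS leq_add2l -ltnS ltn_ord. Qed.

End Helpers.
Import Helpers.

Import Order.TTheory GRing.Theory Num.Theory.
Local Open Scope ring_scope.
Local Open Scope classical_set_scope.
Import numFieldNormedType.Exports.

Theorem proposition7 (R : realType) (d : measure_display) (Omega : measurableType d)
    (mu : set Omega -> R) (Y : nat -> Omega -> R) :
  continuous_capacity mu -> stochastic_process Y ->
  (stationary mu Y <-> shift_invariant (law mu Y)).
Proof.
move=> [_ [hup hdown]] hY.
have hY' : forall n, measurable_fun setT ((fun m => Y m.+1) n) by move=> n; exact: hY.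
split.
- move=> hst.
  pose G := [set C : set (nat -> R) | sigma_cyl C /\ law mu Y (Defs.shift @^-1` C) = law mu Y C].
  have mG : monotone G.
    split.
    + move=> F ndF hF.
      have sF n : F n `<=` F n.+1 by apply/subsetPset/ndF.
      split; first by apply: sigma_cylU => n; case: (hF n).
      pose A n := [set w | F n (fun m => Y m w)].
      pose A' n := [set w | F n (fun m => Y m.+1 w)].
      have h1 : (mu \o A) @ \oo --> law mu Y (\bigcup_n F n).
        apply: hup.
        - by move=> n; apply: meas_cyl => //; case: (hF n).
        - by apply: meas_cyl => //; apply: sigma_cylU => n; case: (hF n).
        - by move=> n w; apply: sF.
        - by apply/seteqP; split => w [n _ h]; exists n.
      have h2 : (mu \o A') @ \oo --> law mu Y (Defs.shift @^-1` \bigcup_n F n).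
        apply: hup.
        - by move=> n; apply: (meas_cyl hY'); case: (hF n).
        - by apply: (meas_cyl hY'); apply: sigma_cylU => n; case: (hF n).
        - by move=> n w; apply: sF.
        - by apply/seteqP; split => w [n _ h]; exists n.
      have eq : mu \o A' = mu \o A by apply/funext => n; exact: (hF n).2.
      by rewrite -(cvg_lim (@Rhausdorff R) h1) -(cvg_lim (@Rhausdorff R) h2) eq.
    + move=> F niF hF.
      have sF n : F n.+1 `<=` F n by apply/subsetPset/niF.
      split; first by apply: sigma_cylI => n; case: (hF n).
      pose A n := [set w | F n (fun m => Y m w)].
      pose A' n := [set w | F n (fun m => Y m.+1 w)].
      have h1 : (mu \o A) @ \oo --> law mu Y (\bigcap_n F n).
        apply: hdown.
        - by move=> n; apply: meas_cyl => //; case: (hF n).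
        - by apply: meas_cyl => //; apply: sigma_cylI => n; case: (hF n).
        - by move=> n w; apply: sF.
        - by apply/seteqP; split => w h.
      have h2 : (mu \o A') @ \oo --> law mu Y (Defs.shift @^-1` \bigcap_n F n).
        apply: hdown.
        - by move=> n; apply: (meas_cyl hY'); case: (hF n).
        - by apply: (meas_cyl hY'); apply: sigma_cylI => n; case: (hF n).
        - by move=> n w; apply: sF.
        - by apply/seteqP; split => w h.
      have eq : mu \o A' = mu \o A by apply/funext => n; exact: (hF n).2.
      by rewrite -(cvg_lim (@Rhausdorff R) h1) -(cvg_lim (@Rhausdorff R) h2) eq.
  have cG : @cylinders R `<=` G.
    move=> _ [n [H [hH ->]]]; split.
      by apply: sub_sigma_algebra; exists n, H.
    by symmetry; exact: (hst 0%N n H hH).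
  move=> C hC.
  have := monotone_setring_sub_g_sigma_ring mG cyl_setring cG (sigma_cyl_sr hC).
  by case.
- move=> inv n k A hA.
  pose g := fun i : 'I_k.+1 => Ordinal (ltn_shift n i).
  pose C := [set x : nat -> R | A (\row_(i < k.+1) x (n + i)%N)].
  have hC : sigma_cyl C.
    apply: sub_sigma_algebra; exists (n + k)%N, (sel g @^-1` A); split.
      exact: borel_preimage (@sel_cont _ _ _ g) _ hA.
    apply/seteqP; split => x /=; rewrite /sel (_ : \row_i _ = \row_(i < k.+1) x (n + i)%N) //;
      by apply/rowP => i; rewrite !mxE.
  by symmetry; exact: (inv C hC).
Qed.
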